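(* Let $\mathbb F x$ be a one-dimensional vector space and $S(Lev,\mathbb F x)=\bigoplus_{n\ge1}(Lev(n)\otimes(\mathbb F x)^{\otimes n})_{\Sigma_n}$ the free level algebra on one generator. The linear map $S(Lev,\mathbb F x)\to\mathbb F[\mathrm{BHS}]$ sending the class of $I\otimes x^{\otimes n}$ ($I\in\mathscr L(n)$) to $(|I_0|,|I_1|,\dots)$ is an isomorphism of vector spaces, and it is an isomorphism of level algebras when $\mathbb F[\mathrm{BHS}]$ is given the bilinear extension of the product $(u,v)\mapsto u\cdot v$.
   Context: $[n]=\{1,\dots,n\}$. $\mathscr L(n)$: families $I=(I_i)_{i\ge0}$ of disjoint subsets of $[n]$ with union $[n]$ and $\sum_i|I_i|/2^i=1$, with $\Sigma_n$ acting by $\sigma\cdot I=(\sigma(I_i))_i$. Equivalently $I$ is the map $h:[n]\to\mathbb N$ with $h(x)=j$ iff $x\in I_j$. These form a set operad with unit $1\mapsto0$ and full composition $\mu(h\otimes g_1\otimes\dots\otimes g_n)$ sending $m_1+\dots+m_{j-1}+t$ ($1\le t\le m_j$) to $h(j)+g_j(t)$; $Lev=\mathbb F[\mathscr L]$ is the linear operad it spans, whose algebras are level algebras (vector spaces with a commutative bilinear product $*$ with $(a*b)*(c*d)=(a*c)*(b*d)$). The level product on the free algebra $S(Lev,\mathbb F x)$ is $a*b=\mu(h_2\otimes a\otimes b)$ with $h_2:[2]\to\mathbb N$ constant equal to $1$. $\mathrm{BHS}=\bigsqcup_{n\ge1}\mathrm{BHS}(n)$, $\mathrm{BHS}(n)=\{u\in\mathbb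 N^{\mathbb N}:\sum_iu(i)=n,\ \sum_iu(i)/2^i=1\}$; for $u,v\in\mathrm{BHS}$, $u\cdot v=(0,u(0)+v(0),u(1)+v(1),\dots)$. *)

(* Defs.v *)
From HB Require Import structures.
From mathcomp Require Import all_boot all_order all_algebra.
From mathcomp Require Import fingroup perm.
From mathcomp Require Import finmap.
From mathcomp Require Import monalg.

Set Implicit Arguments.
Unset Strict Implicit.
Unset Printing Implicit Defensive.

Import GRing.Theory Num.Theory.
Local Open Scope ring_scope.
Local Open Scope fset_scope.

(* An element I of L(n) is encoded by its level map h : [n] -> N       *)
(* (h x = j iff x \in I_j), written as the sequence                    *)
(* [:: h 1; ...; h n] (position k-1 holds h k).                        *)

(* sum_i |I_i| / 2^i  =  sum_{x in [n]} 2^(- h x) *)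
Definition lev_weight (h : seq nat) : rat := \sum_(x <- h) (2%:R ^- x).

Definition is_level (h : seq nat) : bool := lev_weight h == 1.

Definition is_level_n (n : nat) (h : seq nat) : bool :=
  (size h == n) && is_level h.

(* the disjoint union of the L(n), n >= 1 (n = size h; a level map of size
   0 has weight 0, so never occurs) : basis of  (+)_n Lev(n) (x) (Fx)^(x)n *)
Definition Ltree := {h : seq nat | is_level h}.

Definition arity (I : Ltree) : nat := size (val I).

(* Sigma_n action: sigma . I = (sigma(I_i))_i, i.e. sigma . h = h o sigma^-1 *)
Definition perm_act (n : nat) (h : seq nat) (s : 'S_n) : seq nat :=
  [seq nth 0%N h (val (s^-1%g i)) | i <- enum 'I_n].

(* full composition  mu(h (x) g_1 (x) ... (x) g_k) : position
   m_1+...+m_{j-1}+t  is sent to  h(j) + g_j(t). *)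
Definition mu (h : seq nat) (gs : seq (seq nat)) : seq nat :=
  flatten [seq map (addn hg.1) hg.2 | hg <- zip h gs].

Definition h2 : seq nat := [:: 1%N; 1%N].

(* level product on representatives: I * J = mu(h_2 (x) I (x) J)
   (the result is always a level tree; insubd is only used to avoid
   carrying the proof) *)
Definition ltree_prod (I J : Ltree) : Ltree := insubd I (mu h2 [:: val I; val J]).

(* the representative space (+)_{n>=1} Lev(n) (x) (Fx)^(x)n, identified with
   (+)_n F[L(n)] via I (x) x^(x)n |-> I *)
Definition FLev (F : fieldType) := {malg F[Ltree]}.

(* the subspace spanned by the  sigma.(I (x) x^n) - I (x) x^n  : the coinvariants
   S(Lev, Fx) are FLev / coinv_ker *)
Definition coinv_rel (I J : Ltree) : Prop :=
  exists s : 'S_(arity I), val J = perm_act (val I) s.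

Definition coinv_ker (F : fieldType) (v : FLev F) : Prop :=
  exists r : seq (F * Ltree * Ltree),
    (forall t, t \in r -> coinv_rel t.1.2 t.2) /\
    v = \sum_(t <- r) t.1.1 *: (<< t.2 >> - << t.1.2 >>).

Definition lev_mul (F : fieldType) (a b : FLev F) : FLev F :=
  \sum_(I <- msupp a) \sum_(J <- msupp b) (a@_I * b@_J) *: << ltree_prod I J >>.

(* elements of N^N with finite sum are exactly the finitely supported ones *)
Definition NN := {fsfun nat -> nat with 0%N}.

Definition bhs_size (u : NN) : nat := (\sum_(i <- finsupp u) u i)%N.
Definition bhs_weight (u : NN) : rat := \sum_(i <- finsupp u) (u i)%:R * 2%:R ^- i.

Definition is_BHS_n (n : nat) (u : NN) : bool :=
  (bhs_size u == n) && (bhs_weight u == 1).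

Definition is_BHS (u : NN) : bool := (0 < bhs_size u)%N && is_BHS_n (bhs_size u) u.

Definition BHS := {u : NN | is_BHS u}.

(* u . v = (0, u(0)+v(0), u(1)+v(1), ...) *)
Definition bhs_dot_fun (u v : NN) : NN :=
  [fsfun i in [fset j.+1 | j in finsupp u `|` finsupp v] => (u i.-1 + v i.-1)%N].

Definition bhs_wit_fun : NN := [fsfun i in [fset 1%N] => 2%N].

Lemma finsupp_bhs_wit : finsupp bhs_wit_fun = [fset 1%N].
Proof.
apply/fsetP=> x; rewrite mem_finsupp /bhs_wit_fun fsfun_fun.
by case: ifP.
Qed.

Lemma is_BHS_wit : is_BHS bhs_wit_fun.
Proof.
rewrite /is_BHS /is_BHS_n /bhs_size /bhs_weight finsupp_bhs_wit !big_seq_fset1.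
by rewrite /bhs_wit_fun fsfun_fun inE eqxx.
Qed.

Definition bhs_wit : BHS := exist _ bhs_wit_fun is_BHS_wit.

(* the product u . v on BHS (BHS is closed under it; insubd only avoids
   carrying the proof) *)
Definition bhs_dot (u v : BHS) : BHS := insubd u (bhs_dot_fun (val u) (val v)).

Definition ltype_fun (I : Ltree) : NN :=
  [fsfun i in [fset x | x in val I] => count_mem i (val I)].

(* ltype_fun I always lies in BHS(arity I); insubd only avoids carrying the proof *)
Definition ltype (I : Ltree) : BHS := insubd bhs_wit (ltype_fun I).

Definition FBHS (F : fieldType) := {malg F[BHS]}.

Definition bhs_mul (F : fieldType) (a b : FBHS F) : FBHS F :=
  \sum_(u <- msupp a) \sum_(v <- msupp b) (a@_u * b@_v) *: << bhs_dot u v >>.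

(* Main.v *)
Require Import Defs.
From HB Require Import structures.
From mathcomp Require Import all_boot all_order all_algebra.
From mathcomp Require Import fingroup perm finmap monalg.
Import GRing.Theory.
Local Open Scope ring_scope.



Lemma ltype_funE (I : Ltree) i : ltype_fun I i = count_mem i (val I).
Proof.
rewrite /ltype_fun fsfun_fun; case: ifPn => // Hi.
apply/esym/count_memPn; apply: contra Hi => Hi.
by apply/imfsetP; exists i.
Qed.

Lemma sum_count_nat (t s : seq nat) : uniq t -> {subset s <= t} ->
  (\sum_(i <- t) count_mem i s)%N = size s.
Proof.
move=> ut; elim: s => [|x s IH] sub /=; first by rewrite big1.
rewrite big_split /= IH; last by move=> y ys; apply: sub; rewrite inE ys orbT.
rewrite (bigD1_seq x) ?sub ?inE ?eqxx //= big1 ?addn0 ?add1n // => i /negPf.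
by rewrite eq_sym => ->.
Qed.

Lemma sum_count_rat (t s : seq nat) (G : nat -> rat) : uniq t -> {subset s <= t} ->
  \sum_(i <- t) (count_mem i s)%:R * G i = \sum_(x <- s) G x.
Proof.
move=> ut; elim: s => [|x s IH] sub /=; first by rewrite big_nil big1 // => i _; rewrite mul0r.
rewrite big_cons -IH; last by move=> y ys; apply: sub; rewrite inE ys orbT.
under eq_bigr do rewrite natrD mulrDl.
rewrite big_split /=; congr (_ + _).
rewrite (bigD1_seq x) ?sub ?inE ?eqxx //= big1 ?addr0 ?mul1r // => i /negPf.
by rewrite eq_sym => ->; rewrite mul0r.
Qed.

Lemma finsupp_ltype (I : Ltree) : finsupp (ltype_fun I) =i val I.
Proof. by move=> i; rewrite mem_finsupp ltype_funE -lt0n -has_count has_pred1. Qed.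

Lemma is_BHS_ltype (I : Ltree) : is_BHS (ltype_fun I).
Proof.
have sub : {subset val I <= finsupp (ltype_fun I)} by move=> x; rewrite finsupp_ltype.
have hs : bhs_size (ltype_fun I) = size (val I).
  rewrite /bhs_size; under eq_bigr do rewrite ltype_funE.
  by apply: sum_count_nat => //; apply: fset_uniq.
have hw : bhs_weight (ltype_fun I) = 1.
  rewrite /bhs_weight; under eq_bigr do rewrite ltype_funE.
  rewrite sum_count_rat //; last exact: fset_uniq.
  by have := valP I; rewrite /is_level => /eqP.
rewrite /is_BHS /is_BHS_n hs hw eqxx andbT lt0n size_eq0.
apply/eqP => h0; have := valP I; rewrite /is_level /lev_weight h0 big_nil.
by [].
Qed.

Lemma val_ltype (I : Ltree) : val (ltype I) = ltype_fun I.
Proof. by rewrite /ltype insubdK //; apply: is_BHS_ltype. Qed.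

Lemma ltype_eqP (I J : Ltree) :
  ltype I = ltype J <-> (forall i, count_mem i (val I) = count_mem i (val J)).
Proof.
split=> [E i|E].
  by rewrite -!ltype_funE -!val_ltype E.
by rewrite /ltype; congr insubd; apply/fsfunP => i; rewrite !ltype_funE.
Qed.

Lemma ltype_perm (I J : Ltree) : ltype I = ltype J <-> perm_eq (val I) (val J).
Proof.
rewrite ltype_eqP; split=> [E|P i]; last by move/seq.permP: P => ->.
by apply/allP => x _ /=; rewrite (E x).
Qed.



Lemma perm_act_tuple (h : seq nat) (s : 'S_(size h)) :
  perm_act h s = val [tuple tnth (in_tuple h) (s^-1%g i) | i < size h].
Proof.
rewrite /perm_act /= -map_comp /=.
rewrite enumT; apply: eq_map => i /=; by rewrite (tnth_nth 0).
Qed.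

Lemma coinv_ltype (I J : Ltree) : coinv_rel I J -> ltype I = ltype J.
Proof.
case=> s E; apply/ltype_perm; rewrite E perm_act_tuple perm_sym.
apply/(@tuple_permP _ (size (val I)) _ (in_tuple (val I))).
by exists (s^-1)%g. Qed.

Lemma ltype_coinv (I J : Ltree) : ltype I = ltype J -> coinv_rel I J.
Proof.
move/ltype_perm; rewrite perm_sym => /(@tuple_permP _ (size (val I)) _ (in_tuple (val I))) [p Ep].
exists (p^-1)%g; rewrite perm_act_tuple invgK.
exact: Ep.
Qed.



Definition gseq (u : NN) : seq nat := flatten [seq nseq (u i) i | i <- finsupp u].

Lemma count_gseq (u : NN) j : count_mem j (gseq u) = u j.
Proof.
rewrite /gseq count_flatten -map_comp.
have -> : sumn [seq (count_mem j \o (fun i => nseq (u i) i)) i | i <- finsupp u]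
        = (\sum_(i <- finsupp u) (i == j) * u i)%N.
  rewrite sumnE big_map; apply: eq_bigr => i _ /=.
  by rewrite count_nseq /= eq_sym.
case: (boolP (j \in finsupp u)) => Hj.
  rewrite (bigD1_seq j) //= ?eqxx ?mul1n ?big1 ?addn0 // ?fset_uniq //.
  by move=> i /negPf ->.
rewrite big1_seq; last by move=> i /= Hi; case: eqP Hi Hj => // -> ->.
by move: Hj; rewrite mem_finsupp negbK => /eqP.
Qed.

Lemma sum_nseq (n a : nat) (G : nat -> rat) :
  \sum_(x <- nseq n a) G x = n%:R * G a.
Proof.
elim: n => [|n IH]; first by rewrite big_nil mul0r.
by rewrite /= big_cons IH -{1}(mul1r (G a)) -mulrDl -natr1 addrC.
Qed.

Lemma weight_gseq (u : NN) : lev_weight (gseq u) = bhs_weight u.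
Proof.
rewrite /lev_weight /gseq big_flatten /= big_map /bhs_weight.
by apply: eq_bigr => i _; rewrite sum_nseq.
Qed.

Lemma gseq_level (u : BHS) : is_level (gseq (val u)).
Proof.
rewrite /is_level weight_gseq.
by case/andP: (valP u) => _ /andP [].
Qed.

Definition gB (u : BHS) : Ltree := exist _ (gseq (val u)) (gseq_level u).

Lemma ltype_gB (u : BHS) : ltype (gB u) = u.
Proof.
apply: val_inj; rewrite val_ltype; apply/fsfunP => i.
by rewrite ltype_funE count_gseq.
Qed.



Lemma weight_mapS (s : seq nat) :
  lev_weight (map (addn 1) s) = 2%:R^-1 * lev_weight s.
Proof.
rewrite /lev_weight big_map mulr_sumr; apply: eq_bigr => x _.
by rewrite add1n exprS invfM.
Qed.

Lemma mu_h2 (a b : seq nat) : mu h2 [:: a; b] = map (addn 1) a ++ map (addn 1) b.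
Proof. by rewrite /mu /= cats0. Qed.

Lemma prod_level (I J : Ltree) : is_level (mu h2 [:: val I; val J]).
Proof.
rewrite /is_level mu_h2 /lev_weight big_cat /= -!/(lev_weight _) !weight_mapS.
move: (valP I) (valP J); rewrite /is_level => /eqP -> /eqP ->.
by [].
Qed.

Lemma val_prod (I J : Ltree) :
  val (ltree_prod I J) = map (addn 1) (val I) ++ map (addn 1) (val J).
Proof. by rewrite /ltree_prod insubdK; [exact: mu_h2 | exact: prod_level]. Qed.

Lemma ltype_prod (I J : Ltree) :
  ltype (ltree_prod I J) = bhs_dot (ltype I) (ltype J).
Proof.
apply: val_inj; rewrite /bhs_dot !val_ltype.
have -> : bhs_dot_fun (ltype_fun I) (ltype_fun J) = ltype_fun (ltree_prod I J).
  apply/fsfunP => i; rewrite /bhs_dot_fun fsfun_fun [in RHS]ltype_funE val_prod.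
  rewrite count_cat !count_map.
  case: i => [|j].
    case: ifPn => [/imfsetP [x _] //|_].
    by rewrite !(@eq_count _ _ pred0) ?count_pred0.
  rewrite !(@eq_count _ _ (pred1 j)); last first.
    by move=> x /=; rewrite add1n eqSS.
    by move=> x /=; rewrite add1n eqSS.
  rewrite !ltype_funE /=.
  case: ifPn => // Hj.
  have : j \notin (finsupp (ltype_fun I) `|` finsupp (ltype_fun J))%fset.
    by apply: contra Hj => Hj; apply/imfsetP; exists j.
  rewrite !inE !finsupp_ltype negb_or => /andP [/count_memPn -> /count_memPn ->].
  by [].
by rewrite insubdK //; apply: is_BHS_ltype.
Qed.



Section Bil.
Variable F : fieldType.

Lemma malgUZ (K : choiceType) (c : F) (k : K) : << c *g k >> = c *: << k >>.
Proof.
by apply/malgP => k'; rewrite mcoeffZ !mcoeffU mulr_natr.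
Qed.

Lemma bhs_mulEw (S T : {fset BHS}) (x y : FBHS F) :
  (msupp x `<=` S)%fset -> (msupp y `<=` T)%fset ->
  bhs_mul x y = \sum_(u <- S) \sum_(v <- T) (x@_u * y@_v) *: << bhs_dot u v >>.
Proof.
move=> hS hT; rewrite /bhs_mul (big_fset_incl _ hS); last first.
  move=> u _ /mcoeff_outdom ->; rewrite big1 // => v _.
  by rewrite mul0r scale0r.
apply: eq_bigr => u _; rewrite (big_fset_incl _ hT) //.
by move=> v _ /mcoeff_outdom ->; rewrite mulr0 scale0r.
Qed.

Lemma bhs_mulDl (x1 x2 y : FBHS F) :
  bhs_mul (x1 + x2) y = bhs_mul x1 y + bhs_mul x2 y.
Proof.
set S := (msupp x1 `|` msupp x2)%fset.
rewrite !(@bhs_mulEw S (msupp y)) ?fsubsetUl ?fsubsetUr ?msuppD_le //.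
rewrite -big_split; apply: eq_bigr => u _; rewrite -big_split.
by apply: eq_bigr => v _; rewrite mcoeffD mulrDl scalerDl.
Qed.

Lemma bhs_mulDr (x y1 y2 : FBHS F) :
  bhs_mul x (y1 + y2) = bhs_mul x y1 + bhs_mul x y2.
Proof.
set T := (msupp y1 `|` msupp y2)%fset.
have hS : (msupp x `<=` msupp x)%fset by apply: fsubset_refl.
have h1 : (msupp (y1 + y2) `<=` T)%fset by exact: msuppD_le.
have h2 : (msupp y1 `<=` T)%fset by rewrite /T fsubsetUl.
have h3 : (msupp y2 `<=` T)%fset by rewrite /T fsubsetUr.
rewrite (@bhs_mulEw _ _ _ _ hS h1) (@bhs_mulEw _ _ _ _ hS h2) (@bhs_mulEw _ _ _ _ hS h3).
rewrite -big_split; apply: eq_bigr => u _; rewrite -big_split.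
by apply: eq_bigr => v _; rewrite mcoeffD mulrDr scalerDl.
Qed.

Lemma bhs_mulZl c (x y : FBHS F) : bhs_mul (c *: x) y = c *: bhs_mul x y.
Proof.
rewrite !(@bhs_mulEw (msupp x) (msupp y)) ?msuppZ_le //.
rewrite scaler_sumr; apply: eq_bigr => u _; rewrite scaler_sumr.
by apply: eq_bigr => v _; rewrite mcoeffZ scalerA mulrA.
Qed.

Lemma bhs_mulZr c (x y : FBHS F) : bhs_mul x (c *: y) = c *: bhs_mul x y.
Proof.
rewrite !(@bhs_mulEw (msupp x) (msupp y)) ?msuppZ_le //.
rewrite scaler_sumr; apply: eq_bigr => u _; rewrite scaler_sumr.
by apply: eq_bigr => v _; rewrite mcoeffZ scalerA mulrCA.
Qed.

Lemma bhs_mul0l (y : FBHS F) : bhs_mul 0 y = 0.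
Proof. by rewrite /bhs_mul msupp0 big_nil. Qed.

Lemma bhs_mul0r (x : FBHS F) : bhs_mul x 0 = 0.
Proof. by rewrite /bhs_mul big1 // => u _; rewrite msupp0 big_nil. Qed.

Lemma bhs_mul_suml (T : Type) (r : seq T) (G : T -> FBHS F) y :
  bhs_mul (\sum_(i <- r) G i) y = \sum_(i <- r) bhs_mul (G i) y.
Proof.
elim: r => [|a r IH]; first by rewrite !big_nil bhs_mul0l.
by rewrite !big_cons bhs_mulDl IH.
Qed.

Lemma bhs_mul_sumr (T : Type) (r : seq T) (G : T -> FBHS F) x :
  bhs_mul x (\sum_(i <- r) G i) = \sum_(i <- r) bhs_mul x (G i).
Proof.
elim: r => [|a r IH]; first by rewrite !big_nil bhs_mul0r.
by rewrite !big_cons bhs_mulDr IH.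
Qed.

Lemma bhs_mulUU (u v : BHS) :
  bhs_mul (<< u >> : FBHS F) << v >> = << bhs_dot u v >>.
Proof.
rewrite (@bhs_mulEw [fset u]%fset [fset v]%fset) ?msuppU_le //.
by rewrite !big_seq_fset1 !mcoeffUU mulr1 scale1r.
Qed.

End Bil.



Section Gen.
Variables (F : fieldType) (K1 K2 : choiceType).
Variables (t : K1 -> K2) (g : K2 -> K1) (tg : forall u, t (g u) = u).
Variable phi : {linear {malg F[K1]} -> {malg F[K2]}}.
Hypothesis hphi : forall I, phi << I >> = << t I >>.

Lemma malgE' {K : choiceType} (v : {malg F[K]}) :
  v = \sum_(I <- msupp v) v@_I *: << I >>.
Proof.
rewrite {1}(monalgE v); apply: eq_bigr => I _.
by apply/malgP => k'; rewrite mcoeffZ !mcoeffU mulr_natr.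
Qed.

Lemma phiE v : phi v = \sum_(I <- msupp v) v@_I *: << t I >>.
Proof.
rewrite {1}(malgE' v) linear_sum; apply: eq_bigr => I _.
by rewrite linearZ hphi.
Qed.

Lemma coef_sum (K : choiceType) (T : Type) (r : seq T) (c : T -> F) (f : T -> K) k :
  (\sum_(i <- r) c i *: << f i >>)@_k = \sum_(i <- r) c i * (f i == k)%:R.
Proof.
elim: r => [|a r IH]; first by rewrite !big_nil mcoeff0.
by rewrite !big_cons mcoeffD IH mcoeffZ mcoeffU.
Qed.

Lemma sumg0 v : phi v = 0 -> \sum_(I <- msupp v) v@_I *: << g (t I) >> = 0.
Proof.
move=> h0; apply/malgP => K; rewrite coef_sum mcoeff0.
have h := congr1 (mcoeff (t K)) h0; rewrite phiE coef_sum mcoeff0 in h.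
case: (boolP (g (t K) == K)) => [/eqP E|NE].
  rewrite -[in RHS]h; apply: eq_bigr => I _; congr (_ * _%:R).
  congr (nat_of_bool _); apply/idP/idP => /eqP H; apply/eqP; [by rewrite -H tg | by rewrite H E].
rewrite big1 // => I _; case: (boolP (g (t I) == K)) => [/eqP E|_].
  by rewrite -E tg eqxx in NE.
by rewrite mulr0.
Qed.

Lemma phi_surj w : phi (\sum_(u <- msupp w) w@_u *: << g u >>) = w.
Proof.
rewrite linear_sum [RHS]malgE'; apply: eq_bigr => u _.
by rewrite linearZ hphi tg.
Qed.
End Gen.

Theorem proposition6p7 (F : fieldType)
    (phi : {linear FLev F -> FBHS F})
    (phi_basis : forall I : Ltree, phi << I >> = << ltype I >>) :
  [/\ forall v : FLev F, phi v = 0 <-> coinv_ker v,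
      forall w : FBHS F, exists v : FLev F, phi v = w &
      forall a b : FLev F, phi (lev_mul a b) = bhs_mul (phi a) (phi b)].
Proof.
have phiE : forall v : FLev F, phi v = \sum_(i <- msupp v) v@_i *: << ltype i >> := @phiE F Ltree BHS ltype phi phi_basis.
split.
- move=> v; split.
  + move=> h0; exists [seq (v@_i, gB (ltype i), i) | i <- msupp v]; split.
      move=> x /mapP [i _ ->] /=; apply: ltype_coinv; by rewrite ltype_gB.
    rewrite big_map (eq_bigr (fun j => v@_j *: <<j>> - v@_j *: <<gB (ltype j)>>)); last by move=> j _; rewrite scalerBr.
    rewrite sumrB. have S0 : \sum_(i <- msupp v) v@_i *: <<gB (ltype i)>> = 0 by exact: (@sumg0 F Ltree BHS ltype gB ltype_gB phi phi_basis v h0).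
    rewrite [X in _ - X]S0 subr0. exact: malgE'.
  + case=> r [Hr ->]; rewrite linear_sum big1_seq // => x /andP [_ /Hr /coinv_ltype E].
    rewrite linearZ linearB !phi_basis E subrr. exact: scaler0.
- move=> w; exists (\sum_(u <- msupp w) w@_u *: << gB u >>).
  exact: (@phi_surj F Ltree BHS ltype gB ltype_gB phi phi_basis).
- move=> a b; rewrite /lev_mul linear_sum (phiE a) (phiE b) bhs_mul_suml.
  apply: eq_bigr => I _; rewrite linear_sum bhs_mulZl bhs_mul_sumr scaler_sumr.
  apply: eq_bigr => J _. by rewrite linearZ phi_basis bhs_mulZr bhs_mulUU ltype_prod scalerA.
Qed.
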